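(* Let $(A_n)_{n\ge 0}$ and $(B_n)_{n\ge 0}$ be sequences of real numbers and let $(x_n)_{n\ge 0}$ be a solution of $$x_{n+10}=\frac{x_n}{A_n+B_n\,x_nx_{n+2}x_{n+4}x_{n+6}x_{n+8}},\qquad n\ge 0,$$ with initial values $x_0,\dots,x_9$, such that all terms are well-defined and nonzero. For $j\in\{0,1\}$ put $F_j=\dfrac{1}{x_jx_{j+2}x_{j+4}x_{j+6}x_{j+8}}$. Then for every $k\in\{0,1,\dots,9\}$ and every $n\ge 0$, $$x_{10n+k}=x_k\prod_{s=0}^{n-1}\frac{F_{\tau(k)}\prod\limits_{t=0}^{m_s-1}A_{2t+\tau(k)}+\sum\limits_{i=0}^{m_s-1}\Big(B_{2i+\tau(k)}\prod\limits_{l=i+1}^{m_s-1}A_{2l+\tau(k)}\Big)}{F_{\tau(k)}\prod\limits_{t=0}^{m_s}A_{2t+\tau(k)}+\sum\limits_{i=0}^{m_s}\Big(B_{2i+\tau(k)}\prod\limits_{l=i+1}^{m_s}A_{2l+\tau(k)}\Big)},$$ where $m_s=5s+\lfloor k/2\rfloor$.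
   Context: $\tau(k)\in\{0,1\}$ denotes the remainder of $k$ upon division by $2$ and $\lfloor\cdot\rfloor$ is the floor function, so $k=2\lfloor k/2\rfloor+\tau(k)$. Empty products equal $1$, empty sums equal $0$; for $n=0$ the outer product is empty. This equation is the forward shift by $9$ of $x_{n+1}=x_{n-9}/(a_n+b_nx_{n-1}x_{n-3}x_{n-5}x_{n-7}x_{n-9})$ with $A_n=a_{n+9}$, $B_n=b_{n+9}$. *)

(* Defs.v *)
From mathcomp Require Import all_boot all_order all_algebra.
Set Implicit Arguments. Unset Strict Implicit. Unset Printing Implicit Defensive.
Import Order.TTheory GRing.Theory Num.Theory.
Local Open Scope ring_scope.

Definition tau (k : nat) : nat := (k %% 2)%N.

Definition Fj {R : fieldType} (x : nat -> R) (j : nat) : R :=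
  (x j * x (j + 2)%N * x (j + 4)%N * x (j + 6)%N * x (j + 8)%N)^-1.

Definition Gterm {R : fieldType} (A B : nat -> R) (F : R) (r M : nat) : R :=
  F * \prod_(0 <= t < M) A (2 * t + r)%N
  + \sum_(0 <= i < M) (B (2 * i + r)%N * \prod_(i.+1 <= l < M) A (2 * l + r)%N).

(* Main.v *)
Require Import Defs.
From mathcomp Require Import all_boot all_order all_algebra.
From mathcomp Require Import ring lra zify.
Import Order.TTheory GRing.Theory Num.Theory.
Local Open Scope ring_scope.

Lemma G_rec (R : fieldType) (A B : nat -> R) F r M :
  Gterm A B F r M.+1 = A (2 * M + r)%N * Gterm A B F r M + B (2 * M + r)%N.
Proof.
rewrite /Gterm big_nat_recr //=.
rewrite (@big_nat_recr _ _ _ M 0 (fun i => B (2 * i + r)%N * \prod_(i.+1 <= l < M.+1) A (2 * l + r)%N)) //=.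
rewrite [X in _ + B _ * X]big_geq // mulr1.
have -> : \sum_(0 <= i < M) (B (2 * i + r)%N * \prod_(i.+1 <= l < M.+1) A (2 * l + r)%N)
  = (\sum_(0 <= i < M) (B (2 * i + r)%N * \prod_(i.+1 <= l < M) A (2 * l + r)%N)) * A (2 * M + r)%N.
  rewrite big_distrl /=; apply: eq_big_nat => i /andP [_ hi].
  by rewrite big_nat_recr //= mulrA.
ring.
Qed.

Theorem mainTheorem1 (R : realFieldType) (A B x : nat -> R)
  (hden : forall n : nat,
     A n + B n * (x n * x (n + 2)%N * x (n + 4)%N * x (n + 6)%N * x (n + 8)%N) != 0)
  (hrec : forall n : nat,
     x (n + 10)%N = x n / (A n + B n * (x n * x (n + 2)%N * x (n + 4)%N * x (n + 6)%N * x (n + 8)%N)))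
  (hnz : forall n : nat, x n != 0) :
  forall (k n : nat), (k < 10)%N ->
    x (10 * n + k)%N =
      x k * \prod_(0 <= s < n)
        (Gterm A B (Fj x (tau k)) (tau k) (5 * s + k %/ 2)%N
         / Gterm A B (Fj x (tau k)) (tau k) (5 * s + k %/ 2).+1).
Proof.
pose P n := x n * x (n + 2)%N * x (n + 4)%N * x (n + 6)%N * x (n + 8)%N.
have Pnz : forall n, P n != 0.
  by move=> n; rewrite /P !mulf_neq0.
have key : forall n, (P (n + 2)%N)^-1 = A n * (P n)^-1 + B n.
  move=> n.
  have e : P (n + 2)%N = P n * (x (n + 10)%N / x n).
    rewrite /P -!addnA /=.
    have hn := hnz n; field; exact: hn.
  rewrite e hrec.
  have hd := hden n; have hn := hnz n; have hp := Pnz n.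
  rewrite /P in hp *. field. by rewrite !hnz hd.
have hy : forall r M, Gterm A B (Fj x r) r M = (P (2 * M + r)%N)^-1.
  move=> r; elim=> [|M IH].
    by rewrite /Gterm !big_geq // mulr1 addr0 /Fj /P.
  rewrite G_rec IH -key; congr (_^-1); congr P; lia.
have step : forall n, x (n + 10)%N = x n * (P n)^-1 / (P (n + 2)%N)^-1.
  move=> n; rewrite hrec key.
  have hp := Pnz n.
  have -> : A n + B n * (x n * x (n + 2)%N * x (n + 4)%N * x (n + 6)%N * x (n + 8)%N)
     = P n * (A n * (P n)^-1 + B n).
    rewrite /P; field; by rewrite !hnz.
  have := hden n; rewrite -/(P n) => hd.
  have h2 : A n * (P n)^-1 + B n != 0.
    apply: contraNneq hd => h.
    have -> : A n + B n * P n = P n * (A n * (P n)^-1 + B n) by field.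
    by rewrite h mulr0.
  field; by rewrite hp hd.
move=> k n hk; elim: n => [|n IH].
  by rewrite big_geq // mulr1 muln0 add0n.
rewrite big_nat_recr // mulrA -IH !hy.
have -> : (10 * n.+1 + k = (10 * n + k) + 10)%N by lia.
rewrite step.
have ek : (10 * n + k = 2 * (5 * n + k %/ 2) + tau k)%N.
  rewrite /tau; have := divn_eq k 2; lia.
rewrite ek mulrA.
have -> : (2 * (5 * n + k %/ 2).+1 + tau k = 2 * (5 * n + k %/ 2) + tau k + 2)%N by rewrite mulnS; lia.
by [].
Qed.
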